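(* Let $\mathcal{T},\mathcal{U},\mathcal{B}$ be tile sets with mutually consistent frequencies and let $U\in\mathcal{U}$. Then \[ d(\mathcal{T}\cup\{U\},\mathcal{U};\mathcal{B})\le d(\mathcal{T},\mathcal{U};\mathcal{B}). \]
   Context: Fix $n,m\ge1$; $\mathcal{D}$ is the set of $n\times m$ binary matrices. A tile is $T=(t(T),a(T))$ with nonempty $t(T)\subseteq\{1..n\}$, $a(T)\subseteq\{1..m\}$, $\mathrm{area}(T)=t(T)\times a(T)$. $\mathrm{fr}(T;D)=\frac1{|\mathrm{area}(T)|}\sum_{(i,j)\in\mathrm{area}(T)}D(i,j)$, $\mathrm{fr}(T;p)=\sum_Dp(D)\mathrm{fr}(T;D)$. Each tile carries a target frequency $\alpha_T$; tile sets are consistent if some distribution on $\mathcal{D}$ attains all target frequencies simultaneously. For a tile set $\mathcal{T}$, $p^*_{\mathcal{T}}$ is the entropy-maximising distribution among those with $\mathrm{fr}(T;p)=\alpha_T$ for all $T\in\mathcal{T}$. $\mathrm{KL}(\mathcal{T}\|\mathcal{U})=\mathrm{KL}(p^*_{\mathcal{T}}\|p^*_{\mathcal{U}})$. With $\mathcal{M}=\mathcal{T}\cup\mathcal{U}\cup\mathcal{B}$, $d(\mathcal{T},\mathcal{U};\mathcal{B})=\frac{\mathrm{KL}(\mathcal{M}\|\mathcal{U}\cup\mathcal{B})+\mathrm{KL}(\mathcal{M}\|\mathcal{T}\cup\mathcal{B})}{\mathrm{KL}(\mathcal{M}\|\mathcal{B})}$, defined as $1$ if $\mathrm{KL}(\mathcal{M}\|\mathcal{B})=0$.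 *)

(* Defs.v *)
From HB Require Import structures.
From mathcomp Require Import all_boot.
From Stdlib Require Import Reals ClassicalEpsilon.

Set Implicit Arguments.
Unset Strict Implicit.
Unset Printing Implicit Defensive.

(* Indices {1..n} are rendered as 'I_n = {0..n-1}. *)

Definition mat (n m : nat) := {ffun 'I_n * 'I_m -> bool}.

Record tile (n m : nat) := Tile { trows : {set 'I_n}; tcols : {set 'I_m} }.

Definition tile_nonempty n m (T : tile n m) : Prop :=
  trows T != set0 /\ tcols T != set0.

Definition area n m (T : tile n m) : {set 'I_n * 'I_m} :=
  setX (trows T) (tcols T).

Definition fr_mat n m (T : tile n m) (D : mat n m) : R :=
  (/ INR #|area T| *
   \big[Rplus/0%R]_(ij in area T) (if D ij then 1%R else 0%R))%R.

Definition is_dist n m (p : mat n m -> R) : Prop :=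
  (forall D, (0 <= p D)%R) /\ \big[Rplus/0%R]_(D : mat n m) p D = 1%R.

Definition fr n m (T : tile n m) (p : mat n m -> R) : R :=
  \big[Rplus/0%R]_(D : mat n m) (p D * fr_mat T D)%R.

(* A tile set: a finite collection of tiles, each carrying its target
   frequency alpha_T.  Union of tile sets is list concatenation. *)
Definition tileset n m := list (tile n m * R).

Definition satisfies n m (S : tileset n m) (p : mat n m -> R) : Prop :=
  is_dist p /\ forall Ta, List.In Ta S -> fr Ta.1 p = Ta.2.

Definition consistent n m (S : tileset n m) : Prop :=
  exists p, satisfies S p.

(* Shannon entropy (with 0 ln 0 = 0, since 0 * _ = 0) *)
Definition entropy n m (p : mat n m -> R) : R :=
  (- \big[Rplus/0%R]_(D : mat n m) (p D * ln (p D)))%R.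

Definition is_maxent n m (S : tileset n m) (p : mat n m -> R) : Prop :=
  satisfies S p /\ forall q, satisfies S q -> (entropy q <= entropy p)%R.

(* p*_S : the entropy-maximising distribution subject to the constraints
   of S (chosen by Hilbert's epsilon; it exists and is unique whenever S
   is consistent). *)
Definition maxent n m (S : tileset n m) : mat n m -> R :=
  epsilon (inhabits (fun _ : mat n m => 0%R)) (is_maxent S).

(* KL(p || q) = sum_D p(D) ln(p(D)/q(D)), terms with p(D)=0 being 0 *)
Definition KL n m (p q : mat n m -> R) : R :=
  \big[Rplus/0%R]_(D : mat n m) (p D * ln (p D / q D))%R.

Definition KLts n m (S S' : tileset n m) : R := KL (maxent S) (maxent S').

Definition dscore n m (T U B : tileset n m) : R :=
  let M := (T ++ U ++ B)%list in
  let den := KLts M B in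
  if Req_EM_T den 0%R then 1%R
  else ((KLts M (U ++ B)%list + KLts M (T ++ B)%list) / den)%R.

(* Main.v *)
Require Import Defs.
From HB Require Import structures.
From Stdlib Require Import Reals ClassicalEpsilon.
From mathcomp Require Import all_boot all_order all_algebra.
From mathcomp Require Import all_classical all_reals all_analysis.
From mathcomp Require Import Rstruct Rstruct_topology.
From mathcomp Require Import ring lra.
Import Order.TTheory GRing.Theory Num.Theory.
Local Open Scope classical_set_scope.
Local Open Scope ring_scope.
Definition phi (x : R) : R := x * exp.ln x.

Lemma phi_small (t : R) : 0 < t -> t <= 1 -> `|phi t| <= 2 * Num.sqrt t.
Proof.
move=> t0 t1.
pose s : R := Num.sqrt t.
have s0 : 0 < s by rewrite sqrtr_gt0.
have ts : t = s * s by rewrite -expr2 sqr_sqrtr // ltW.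
have lnt : exp.ln t = 2 * exp.ln s by rewrite ts lnM ?posrE //; lra.
have h1 : exp.ln (s^-1) < s^-1 by apply: ln_sublinear; rewrite invr_gt0.
rewrite lnV ?posrE // in h1.
have ph0 : phi t <= 0.
  rewrite /phi; apply: mulr_ge0_le0; [exact: ltW | exact: ln_le0].
rewrite ler0_norm //.
rewrite /phi lnt.
have : - (exp.ln s) * s < 1 by rewrite -(mulVf (lt0r_neq0 s0)) ltr_pM2r.
move=> h2; have h3 : s * (- exp.ln s * s) <= s * 1 by rewrite ler_pM2l // ltW.
rewrite -/s {1}ts.
have -> : -((s*s) * (2 * exp.ln s)) = 2 * (s * (- exp.ln s * s)) by ring.
lra.
Qed.

Lemma phi_le0 (x : R) : x <= 0 -> phi x = 0.
Proof. by move=> h; rewrite /phi ln0 //; exact: mulr0. Qed.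

Lemma phi_cont : continuous phi.
Proof.
move=> x; have [xlt0|xgt0|->] := ltgtP x 0.
- have e : phi x = 0 by rewrite phi_le0 // ltW.
  rewrite /continuous_at e.
  apply: cvg_trans (cvg_cst (0:R)).
  apply: near_eq_cvg; near=> y.
  rewrite phi_le0 //; apply: ltW; near: y; exact: lt_nbhsl.
  exact: nbhs_filter.
- exact: (@continuousM R R (fun y => y) (@exp.ln R) x cvg_id (continuous_ln xgt0)).
- have e : phi 0 = 0 by exact: mul0r.
  rewrite /continuous_at e; apply/(@cvgrPdist_lt _ R^o) => eps eps0.
  pose d : R := Num.min 1 ((eps / 2) ^+ 2).
  have d0 : 0 < d by rewrite lt_min ltr01 exprn_gt0 // divr_gt0.
  exists d => //= t /=; rewrite sub0r normrN => td.
  rewrite sub0r normrN.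
  case: (lerP t 0) => [tle0|tgt0]; first by rewrite phi_le0 // normr0.
  move: td; rewrite lt_min (ger0_norm (ltW tgt0)) => /andP[t1 t2].
  have h := phi_small t tgt0 (ltW t1).
  have : Num.sqrt t < eps / 2.
    rewrite -(@ger0_norm _ (eps / 2)) ?divr_ge0 ?ltW // -sqrtr_sqr ltr_sqrt ?exprn_gt0 ?divr_gt0 //.
  move=> h'; apply: (le_lt_trans h); lra.
Unshelve. all: by end_near.
Qed.

Lemma sum_cont (T : topologicalType) (I : Type) (s : seq I) (P : pred I)
  (F : I -> T -> R) : (forall i, continuous (F i)) ->
  continuous (fun x => \big[Rplus/0%R]_(i <- s | P i) F i x).
Proof.
move=> Fc; elim: s => [|i s IH].
  have -> : (fun x => \big[Rplus/0%R]_(i <- [::] | P i) F i x) = fun _ => 0%R.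
    by apply: funext => x; rewrite big_nil.
  by move=> x; exact: cst_continuous.
have -> : (fun x => \big[Rplus/0%R]_(j <- i :: s | P j) F j x) =
  fun x => if P i then F i x + \big[Rplus/0%R]_(j <- s | P j) F j x
           else \big[Rplus/0%R]_(j <- s | P j) F j x.
  by apply: funext => x; rewrite big_cons.
case: (P i) => //= x.
exact: (@continuousD R R^o T (F i) (fun x => \big[Rplus/0%R]_(j <- s | P j) F j x) x (Fc i x) (IH x)).
Qed.

Lemma entropyE n m (p : mat n m -> R) :
  entropy p = - \sum_(D : mat n m) phi (p D).
Proof.
rewrite /entropy; congr (- _); apply: eq_bigr => D _; by rewrite RlnE.
Qed.

Lemma dist_le1 n m (p : mat n m -> R) : is_dist p -> forall D, 0 <= p D <= 1.
Proof.
move=> [h0 h1] D; have hD : 0 <= p D by apply/RleP.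
have h1' : \sum_(D : mat n m) p D = 1 := h1.
rewrite hD /=; rewrite -h1' (bigD1 D) //= -[X in X <= _]addr0 lerD2l.
by apply: sumr_ge0 => i _; apply/RleP.
Qed.

Lemma maxent_exists n m (S : tileset n m) : consistent S -> exists p, is_maxent S p.
Proof.
move=> [p0 Hp0].
pose A : set {ptws mat n m -> R} := [set p | satisfies S p].
have clA : closed A.
  have -> : A = ([set p : {ptws mat n m -> R} | forall D, 0 <= p D] `&`
                 [set p : {ptws mat n m -> R} | \sum_(D : mat n m) p D = 1]) `&`
                 \bigcap_(Ta in [set Ta | List.In Ta S]) [set p : {ptws mat n m -> R} | fr Ta.1 p = Ta.2].
    apply/seteqP; split => p /=.
      move=> [[h0 h1] h2]; split; first split => // D; first by apply/RleP.
      by move=> Ta /= /h2.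
    move=> [[h0 h1] h2]; split; first split => // D; first by apply/RleP.
    by move=> Ta /h2.
  apply: closedI; first apply: closedI.
  - have -> : [set p : {ptws mat n m -> R} | forall D, 0 <= p D] =
       \bigcap_(D in setT) ((fun p : {ptws mat n m -> R} => p D) @^-1` [set x | 0 <= x]).
      apply/seteqP; split => p /= h D //; [move=> _; exact: h | exact: h].
    apply: closed_bigI => D _; apply: preimage_closed; last exact: closed_ge.
    by move=> p _; exact: (@proj_continuous _ (fun _ : mat n m => R) D).
  - apply: (@preimage_closed _ R (fun p : {ptws mat n m -> R} => \sum_(D : mat n m) p D) [set 1]).
      move=> p _; apply: (@sum_cont _ _ _ _ (fun D (p : {ptws mat n m -> R}) => p D)) => D.
      exact: (@proj_continuous _ (fun _ : mat n m => R) D).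
    exact: closed_eq.
  - apply: closed_bigI => Ta _.
    apply: (@preimage_closed _ R (fun p : {ptws mat n m -> R} => fr Ta.1 p) [set Ta.2]); last exact: closed_eq.
    move=> p _; apply: (@sum_cont _ _ _ _ (fun D (p : {ptws mat n m -> R}) => p D * fr_mat Ta.1 D)) => D.
    move=> q; apply: continuousM; last exact: cst_continuous.
    exact: (@proj_continuous _ (fun _ : mat n m => R) D).
have cA : compact A.
  apply: (subclosed_compact clA (tychonoff (fun _ : mat n m => @segment_compact R 0 1))).
  move=> p /= [hd _] D; have := dist_le1 _ _ _ hd D.
  by rewrite /= in_itv.
have A0 : A !=set0 by exists p0.
have ce : {within A, continuous (fun p : {ptws mat n m -> R} => entropy p)}.
  apply: continuous_subspaceT.
  have -> : (fun p : {ptws mat n m -> R} => entropy p) = fun p => - \big[Rplus/0%R]_(D <- index_enum (mat n m) | true) phi (p D).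
    by apply: funext => p; rewrite entropyE.
  move=> p; apply: (@continuousN R R^o _ (fun p : {ptws mat n m -> R} => \big[Rplus/0%R]_(D <- index_enum (mat n m) | true) phi (p D))).
  apply: (@sum_cont _ _ _ _ (fun D (p : {ptws mat n m -> R}) => phi (p D))) => D q.
  apply: continuous_comp; first exact: (@proj_continuous _ (fun _ : mat n m => R) D).
  exact: phi_cont.
have [c cA' cmax] := compact_EVT_max A0 cA ce.
exists c; split; first by move: cA'; rewrite inE.
by move=> q Hq; apply/RleP; apply: cmax; rewrite inE.
Qed.

Lemma pw (q p s r : R) : 0 <= q -> 0 <= p -> p <= 1 -> r = q + s * (p - q) -> 0 <= r ->
  (q = 0 -> 0 < s \/ p = 0) ->
  r * ln r <=
  q * ln q + s * ((p - q) * ln q) + s * (p - q) + s ^+ 2 * ((p - q) ^+ 2 / q)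
  - s * (1 - ln s) * (if q == 0 then p else 0).
Proof.
move=> q0 p0 p1 hr r0 hq.
have [q00|qn0] := eqVneq q 0.
  have hq' := hq q00.
  have lq : ln q = 0 by rewrite q00 ln0.
  have iq : q^-1 = 0 by rewrite q00 invr0.
  rewrite lq iq q00 !(mulr0, mul0r, addr0, add0r, subr0) -/(_ - _).
  have [s0|p00] := hq'.
    have [p00|pn0] := eqVneq p 0.
      have -> : r = 0 by rewrite hr q00 p00; ring.
      rewrite p00 !(mulr0, mul0r, subr0); lra.
    have pgt0 : 0 < p by rewrite lt0r pn0.
    have -> : r = s * p by rewrite hr q00; ring.
    rewrite lnM ?posrE //.
    have : s * p * ln p <= 0 by apply: mulr_ge0_le0; [rewrite mulr_ge0 // ltW | exact: ln_le0].
    lra.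
  have -> : r = 0 by rewrite hr q00 p00; ring.
  rewrite p00 !(mulr0, mul0r, subr0); lra.
have qgt0 : 0 < q by rewrite lt0r qn0.
rewrite mulr0 subr0.
have key : r * ln r <= r * ln q + r * (r / q - 1).
  have [->|rn0] := eqVneq r 0; first by rewrite !mul0r addr0.
  have rgt0 : 0 < r by rewrite lt0r rn0.
  have e : ln r = ln q + ln (r / q).
    by rewrite ln_div ?posrE //; ring.
  rewrite e mulrDr lerD2l ler_pM2l //.
  have := @le_ln1Dx R (r / q - 1).
  rewrite (addrC 1) subrK => -> //.
  have : 0 < r / q by exact: divr_gt0.
  lra.
apply: (le_trans key).
rewrite hr.
have -> : ((q + s * (p - q)) * ln q + (q + s * (p - q)) * ((q + s * (p - q)) / q - 1)
   = q * ln q + s * ((p - q) * ln q) + s * (p - q) + s ^+ 2 * ((p - q) ^+ 2 / q))%R.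
  by field.
by [].
Qed.

Lemma entropyE2 n m (p : mat n m -> R) :
  entropy p = - \sum_(D : mat n m) p D * ln (p D).
Proof.
rewrite /entropy; congr (- _); apply: eq_bigr => D _; by rewrite RlnE.
Qed.

Lemma sat_comb n m (S : tileset n m) (p q : mat n m -> R) (s : R) :
  satisfies S p -> satisfies S q -> (forall D, 0 <= q D + s * (p D - q D)) ->
  satisfies S (fun D => q D + s * (p D - q D)).
Proof.
move=> [[p0 p1] pf] [[q0 q1] qf] h.
have p1' : \sum_(D : mat n m) p D = 1 := p1.
have q1' : \sum_(D : mat n m) q D = 1 := q1.
split; [split|].
- by move=> D; apply/RleP.
- change (\sum_(D : mat n m) (q D + s * (p D - q D)) = 1).
  by rewrite big_split /= -mulr_sumr sumrB p1' q1' subrr mulr0 addr0.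
- move=> Ta HTa.
  have e1 : \sum_(D : mat n m) p D * fr_mat Ta.1 D = Ta.2 := pf Ta HTa.
  have e2 : \sum_(D : mat n m) q D * fr_mat Ta.1 D = Ta.2 := qf Ta HTa.
  change (\sum_(D : mat n m) (q D + s * (p D - q D)) * fr_mat Ta.1 D = Ta.2).
  rewrite (eq_bigr (fun D => q D * fr_mat Ta.1 D + s * (p D * fr_mat Ta.1 D - q D * fr_mat Ta.1 D))); last by move=> D _; ring.
  by rewrite big_split /= -mulr_sumr sumrB e1 e2 subrr mulr0 addr0.
Qed.
Arguments sat_comb {n m S p q s}.

Definition aa n m (p q : mat n m -> R) := \sum_(D : mat n m) (p D - q D) * ln (q D).
Definition KK n m (p q : mat n m -> R) := \sum_(D : mat n m) (p D - q D) ^+ 2 / q D.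
Definition PP n m (p q : mat n m -> R) := \sum_(D : mat n m) (if q D == 0 then p D else 0).
Arguments aa {n m}. Arguments KK {n m}. Arguments PP {n m}.

Lemma KK_ge0 n m (p q : mat n m -> R) : is_dist q -> 0 <= KK p q.
Proof.
move=> [q0 _]; apply: sumr_ge0 => D _; apply: divr_ge0; first exact: sqr_ge0.
by apply/RleP.
Qed.
Arguments KK_ge0 {n m} p {q}.

Lemma sum_bound n m (p q : mat n m -> R) (s : R) : is_dist p -> is_dist q ->
  (forall D, 0 <= q D + s * (p D - q D)) ->
  (forall D, q D = 0 -> 0 < s \/ p D = 0) ->
  \sum_(D : mat n m) (q D + s * (p D - q D)) * ln (q D + s * (p D - q D)) <=
  \sum_(D : mat n m) q D * ln (q D) + s * aa p q + s ^+ 2 * KK p q - s * (1 - ln s) * PP p q.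
Proof.
move=> hp hq hr hz.
have p1' : \sum_(D : mat n m) p D = 1 := hp.2.
have q1' : \sum_(D : mat n m) q D = 1 := hq.2.
apply: le_trans.
  apply: ler_sum => D _; apply: (pw (q D) (p D) s); last exact: hz.
  - by apply/RleP; exact: hq.1.
  - by apply/RleP; exact: hp.1.
  - by case/andP: (dist_le1 _ _ _ hp D).
  - by [].
  - exact: hr.
rewrite sumrB !big_split /= -!mulr_sumr.
rewrite [\sum_(i : mat n m) (p i - q i)]sumrB p1' q1' subrr mulr0 addr0.
by rewrite /aa /KK /PP.
Qed.
Arguments sum_bound {n m p q} s.

Lemma maxP n m (S : tileset n m) (q r : mat n m -> R) : is_maxent S q -> satisfies S r ->
  \sum_(D : mat n m) q D * ln (q D) <= \sum_(D : mat n m) r D * ln (r D).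
Proof.
move=> [_ Hm] Hr; have := Hm r Hr; move/RleP; rewrite !entropyE2 lerN2 //.
Qed.
Arguments maxP {n m S q r}.

Lemma supp n m (S : tileset n m) (q p : mat n m -> R) :
  is_maxent S q -> satisfies S p -> forall D, q D = 0 -> p D = 0.
Proof.
move=> Hq Hp D0 qD0.
have [//|pn0] := eqVneq (p D0) 0.
exfalso.
have hp := Hp.1; have hq := Hq.1.1.
have pge0 D : 0 <= p D by apply/RleP; exact: hp.1.
have qge0 D : 0 <= q D by apply/RleP; exact: hq.1.
have pD0 : 0 < p D0 by rewrite lt0r pn0 pge0.
have K0 := KK_ge0 p hq.
have P0 : p D0 <= PP p q.
  rewrite /PP (bigD1 D0) //= qD0 eqxx -[X in X <= _]addr0 lerD2l.
  by apply: sumr_ge0 => D _; case: ifP.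
have P0g : 0 < PP p q by apply: lt_le_trans P0.
set a : R := aa p q; set K : R := KK p q; set P : R := PP p q.
pose c : R := (`|a| + K) / P.
have c0 : 0 <= c by rewrite divr_ge0 // ?addr_ge0 // ltW.
pose s : R := expR (- c).
have s0 : 0 < s := expR_gt0 _.
have s1 : s <= 1 by rewrite expR_le1 oppr_le0.
have lns : ln s = - c by rewrite expRK.
have hr D : 0 <= q D + s * (p D - q D).
  have h1 : 0 <= (1 - s) * q D by rewrite mulr_ge0 // subr_ge0.
  have h2 : 0 <= s * p D by rewrite mulr_ge0 // ltW.
  lra.
have Hr := sat_comb Hp Hq.1 hr.
have b1 := maxP Hq Hr.
have b2 := sum_bound s hp hq hr (fun D _ => or_introl s0).
have cP : c * P = `|a| + K by rewrite /c divfK // gt_eqF.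
have e : s * (1 - ln s) * P = s * P + s * (`|a| + K) by rewrite lns -cP; ring.
have h : 0 <= s * (a + s * K - P - `|a| - K).
  have -> : s * (a + s * K - P - `|a| - K) = s * a + s ^+ 2 * K - s * (1 - ln s) * P by rewrite e; ring.
  rewrite -/a -/K -/P in b2; lra.
rewrite pmulr_rge0 // in h.
have ha : a <= `|a| := ler_norm a.
have hsK : s * K <= K by rewrite ler_piMl.
have Pg : 0 < P := P0g.
lra.
Qed.
Arguments supp {n m S q p}.

Lemma lim0 (x K c : R) : 0 < c -> 0 <= K ->
  (forall s, 0 < s -> s <= c -> 0 <= s * x + s ^+ 2 * K) -> 0 <= x.
Proof.
move=> c0 K0 h; rewrite leNgt; apply/negP => xlt0.
pose s := Num.min c (- x / (K + 1)).
have K1 : 0 < K + 1 by rewrite ltr_wpDl.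
have s0 : 0 < s by rewrite lt_min c0 divr_gt0 // oppr_gt0.
have sc : s <= c by rewrite ge_min lexx.
have sx : s * (K + 1) <= - x.
  by rewrite -ler_pdivlMr // ge_min lexx orbT.
have := h s s0 sc.
have : 0 <= s * (- x - s * (K + 1)) by rewrite mulr_ge0 // ?subr_ge0 // ltW.
nra.
Qed.

Lemma pos_lb n m (f : mat n m -> R) :
  exists c, 0 < c /\ c <= 1 /\ forall D, 0 < f D -> c <= f D.
Proof.
suff : forall s : seq (mat n m), exists c, 0 < c /\ c <= 1 /\ forall D, D \in s -> 0 < f D -> c <= f D.
  move=> /(_ (enum (mat n m))) [c [c0 [c1 hc]]]; exists c; split => //; split => // D.
  by apply: hc; rewrite mem_enum.
elim => [|D0 s [c [c0 [c1 hc]]]]; first by exists 1; split => //; split.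
have [fD0|fD0] := ltP 0 (f D0).
  exists (Num.min c (f D0)); split; first by rewrite lt_min c0.
  split; first by rewrite ge_min c1.
  move=> D; rewrite in_cons => /orP [/eqP ->|Ds] fD; first by rewrite ge_min lexx orbT.
  by rewrite ge_min hc.
exists c; split => //; split => // D; rewrite in_cons => /orP [/eqP ->|Ds] fD.
  by move: fD; rewrite ltNge fD0.
exact: hc.
Qed.
Arguments pos_lb {n m}.

Lemma orth n m (S : tileset n m) (q p : mat n m -> R) :
  is_maxent S q -> satisfies S p -> aa p q = 0.
Proof.
move=> Hq Hp.
have hp := Hp.1; have hq := Hq.1.1.
have pge0 D : 0 <= p D by apply/RleP; exact: hp.1.
have qge0 D : 0 <= q D by apply/RleP; exact: hq.1.
have sp := supp Hq Hp.
have P0 : PP p q = 0.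
  by rewrite /PP big1 // => D _; case: eqP => // /sp.
have K0 := KK_ge0 p hq.
have key s : (forall D, 0 <= q D + s * (p D - q D)) -> 0 <= s * aa p q + s ^+ 2 * KK p q.
  move=> hr.
  have Hr := sat_comb Hp Hq.1 hr.
  have b1 := maxP Hq Hr.
  have b2 := sum_bound s hp hq hr (fun D qD => or_intror (sp D qD)).
  rewrite P0 mulr0 subr0 in b2; lra.
apply/eqP; rewrite eq_le; apply/andP; split; last first.
  apply: (lim0 _ (KK p q) 1) => // s s0 s1; apply: key => D.
  have h1 : 0 <= (1 - s) * q D by rewrite mulr_ge0 // subr_ge0.
  have h2 : 0 <= s * p D by rewrite mulr_ge0 // ltW.
  lra.
have [c [c0 [c1 hc]]] := pos_lb q.
rewrite -oppr_ge0; apply: (lim0 _ (KK p q) c) => // s s0 sc.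
have -> : s * - aa p q + s ^+ 2 * KK p q = (- s) * aa p q + (- s) ^+ 2 * KK p q by rewrite sqrrN; ring.
apply: key => D.
have [qD|qD] := eqVneq (q D) 0.
  rewrite qD (sp D qD); lra.
have qgt : 0 < q D by rewrite lt0r qD qge0.
have := hc D qgt.
have p1 : p D <= 1 by case/andP: (dist_le1 _ _ _ hp D).
have h2 : 0 <= s * (1 - p D) by rewrite mulr_ge0 // ?subr_ge0 // ltW.
have h3 : 0 <= s * q D by rewrite mulr_ge0 // ltW.
lra.
Qed.
Arguments orth {n m S q p}.

Lemma KL_id n m (S : tileset n m) (q p : mat n m -> R) :
  is_maxent S q -> satisfies S p -> KL p q = entropy q - entropy p.
Proof.
move=> Hq Hp.
have hp := Hp.1; have hq := Hq.1.1.
have pge0 D : 0 <= p D by apply/RleP; exact: hp.1.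
have qge0 D : 0 <= q D by apply/RleP; exact: hq.1.
have sp := supp Hq Hp.
have o := orth Hq Hp.
rewrite !entropyE2.
have -> : KL p q = \sum_(D : mat n m) (p D * ln (p D) - p D * ln (q D)).
  apply: eq_bigr => D _; rewrite RlnE RdivE RmultE.
  have [pD|pD] := eqVneq (p D) 0; first by rewrite pD !mul0r subrr.
  have pgt : 0 < p D by rewrite lt0r pD pge0.
  have qgt : 0 < q D.
    rewrite lt0r qge0 andbT; apply/eqP => /sp; exact/eqP.
  by rewrite ln_div ?posrE // mulrBr.
rewrite sumrB.
have : \sum_(D : mat n m) p D * ln (q D) = \sum_(D : mat n m) q D * ln (q D).
  have e1 : \sum_(D : mat n m) (p D * ln (q D) - q D * ln (q D)) = aa p q.
    by apply: eq_bigr => D _; rewrite mulrBl.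
  by apply/eqP; rewrite -subr_eq0 -sumrB e1 o.
move=> ->; ring.
Qed.
Arguments KL_id {n m S q p}.

Lemma maxent_spec n m (S : tileset n m) : consistent S -> is_maxent S (maxent S).
Proof. by move=> h; rewrite /maxent; apply: epsilon_spec; exact: maxent_exists. Qed.
Arguments maxent_spec {n m S}.

Lemma sat_sub n m (S S' : tileset n m) (p : mat n m -> R) :
  (forall Ta, List.In Ta S' -> List.In Ta S) -> satisfies S p -> satisfies S' p.
Proof. by move=> h [h1 h2]; split => // Ta /h /h2. Qed.
Arguments sat_sub {n m S S' p}.

Lemma maxent_ext n m (S1 S2 : tileset n m) :
  (forall Ta, List.In Ta S1 <-> List.In Ta S2) -> maxent S1 = maxent S2.
Proof.
move=> h.
have hs p : satisfies S1 p <-> satisfies S2 p.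
  by split; apply: sat_sub => Ta /h.
rewrite /maxent; congr epsilon; apply: funext => p; apply: propext.
rewrite /is_maxent; split => -[H1 H2]; split; try by apply/hs.
- by move=> q /hs; apply: H2.
- by move=> q /hs; apply: H2.
Qed.

Theorem theorem9 (n m : nat) (hn : (0 < n)%N) (hm : (0 < m)%N)
  (T U B : tileset n m)
  (Hne : forall Ta, List.In Ta (T ++ U ++ B)%list -> tile_nonempty Ta.1)
  (Hcons : consistent (T ++ U ++ B)%list)
  (u : tile n m * R) (Hu : List.In u U) :
  Rle (dscore (u :: T) U B) (dscore T U B).
Proof.
have HuM : List.In u (T ++ U ++ B)%list.
  by apply/List.in_app_iff; right; apply/List.in_app_iff; left.
have eM : maxent ((u :: T) ++ U ++ B)%list = maxent (T ++ U ++ B)%list.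
  apply: maxent_ext => Ta /=; split; first by case => [<-|].
  by move=> h; right.
have [p0 Hp0] := Hcons.
have subB : forall Ta, List.In Ta B -> List.In Ta (T ++ U ++ B)%list.
  by move=> Ta h; apply/List.in_app_iff; right; apply/List.in_app_iff; right.
have subTB : forall Ta, List.In Ta (T ++ B)%list -> List.In Ta (T ++ U ++ B)%list.
  move=> Ta /List.in_app_iff [h|h]; apply/List.in_app_iff; first by left.
  by right; apply/List.in_app_iff; right.
have subuTB : forall Ta, List.In Ta (u :: T ++ B)%list -> List.In Ta (T ++ U ++ B)%list.
  by move=> Ta [<-|h] //; apply: subTB.
have HM := maxent_spec Hcons.
set p := maxent (T ++ U ++ B)%list in HM eM *.
have HB := maxent_spec (ex_intro _ p0 (sat_sub subB Hp0)).
have H1 := maxent_spec (ex_intro _ p0 (sat_sub subuTB Hp0)).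
have H2 := maxent_spec (ex_intro _ p0 (sat_sub subTB Hp0)).
have pB := sat_sub subB HM.1.
have p1 := sat_sub subuTB HM.1.
have p2 := sat_sub subTB HM.1.
have q1T : satisfies (T ++ B)%list (maxent (u :: T ++ B)%list).
  by apply: (sat_sub _ H1.1) => Ta h; right.
unfold dscore, KLts; cbv zeta.
rewrite eM.
change ((u :: T) ++ B)%list with (u :: T ++ B)%list.
rewrite -/p; destruct (Req_dec_T (KL p (maxent B)) 0) as [e|hden]; simpl; first exact: Rle_refl.
apply/RleP.
have e1 := KL_id H1 p1.
have e2 := KL_id H2 p2.
rewrite e1 e2.
have hd : 0 <= KL p (maxent B).
  rewrite (KL_id HB pB) subr_ge0; apply/RleP; exact: HB.2 _ pB.
have h12 : entropy (maxent (u :: T ++ B)%list) <= entropy (maxent (T ++ B)%list).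
  by apply/RleP; exact: H2.2 _ q1T.
apply: ler_wpM2r; first by rewrite invr_ge0.
by rewrite !RplusE lerD2l lerD2r.
Qed.
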